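(* In the noiseless case ($\alpha=0$), run GD with learning rate $\eta=1$ from $\mathbf{W}_0=\mathbf{0}$. Then for sufficiently large training time $t\gtrsim1$, the sub-task loss satisfies $\mathcal{L}_j^{\mathrm{GD}}(t)\eqsim 1/(p_j t)$ for every $j\in[K]$, and consequently the total loss satisfies $\mathcal{L}^{\mathrm{GD}}(t)\eqsim K/t$.
   Context: Setup: $K=MC$ knowledge items split into $M$ groups of $C$ items, group $i$ being indices $(i-1)C+1,\dots,iC$. Frequencies: $\widetilde p_1>\dots>\widetilde p_M>0$ with $\sum_i\widetilde p_i=1$ and $p_j=\widetilde p_i/C$ for $j$ in group $i$. $\mathbf{E}=(\mathbf{E}_1,\dots,\mathbf{E}_K)$, $\widetilde{\mathbf{E}}=(\widetilde{\mathbf{E}}_1,\dots,\widetilde{\mathbf{E}}_K)$ are $K\times K$ matrices with orthonormal columns. Noise level $\alpha\in[0,1)$: $p_{i\mid j}=1-\alpha+\alpha/K$ if $i=j$, $\alpha/K$ otherwise. $\widehat p_{i\mid j}(\mathbf{W})=\exp(\widetilde{\mathbf{E}}_i^\top\mathbf{W}\mathbf{E}_j)/\sum_k\exp(\widetilde{\mathbf{E}}_k^\top\mathbf{W}\mathbf{E}_j)$. Sub-task loss $\mathcal{L}_j(\mathbf{W})=-\sum_i p_{i\mid j}\log\widehat p_{i\mid j}(\mathbf{W})$, total loss $\mathcal{L}(\mathbf{W})=\sum_j p_j\mathcal{L}_j(\mathbf{W})$. GD: $\mathbf{W}_{t+1}=\mathbf{W}_t-\eta\nabla\mathcal{L}(\mathbf{W}_t)$;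 $\mathcal{L}^{\mathrm{GD}}_j(t)=\mathcal{L}_j(\mathbf{W}_t)$, $\mathcal{L}^{\mathrm{GD}}(t)=\mathcal{L}(\mathbf{W}_t)$. Regime: $K\gg1$ and $M\ll C$. Notation $\eqsim$ / $\lesssim$ / $\gtrsim$ means equality / inequality up to constant factors.
   Formalization: The bounds hold for all t beyond a threshold that may depend on M, C, the frequencies $\widetilde p_i$ and E, Ẽ, rather than for t ≳ 1; the constants in ≂ are universal. Apart from conventions, each condition added here is assumed in the paper as well or is needed for the statement above to hold. *)

(* Defs.v *)
From HB Require Import structures.
From mathcomp Require Import all_boot all_order all_algebra.
From mathcomp Require Import all_classical all_reals all_analysis.
Set Implicit Arguments. Unset Strict Implicit. Unset Printing Implicit Defensive.
Import Order.TTheory GRing.Theory Num.Theory.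
Local Open Scope ring_scope.

Lemma group_lt (M C : nat) (j : 'I_(M * C)) : (j %/ C < M)%N.
Proof.
case: C j => [|C] j; first by case: j => /= k; rewrite muln0.
by rewrite ltn_divLR // ltn_ord.
Qed.

Definition group (M C : nat) (j : 'I_(M * C)) : 'I_M := Ordinal (group_lt j).

Section Model.
Variable R : realType.

Definition freq (M C : nat) (ptil : 'I_M -> R) (j : 'I_(M * C)) : R :=
  ptil (group j) / C%:R.

Definition cond_p (K : nat) (alpha : R) (i j : 'I_K) : R :=
  if i == j then 1 - alpha + alpha / K%:R else alpha / K%:R.

Definition logits (K : nat) (E Et W : 'M[R]_K) : 'M[R]_K := Et^T *m W *m E.

Definition phat (K : nat) (E Et W : 'M[R]_K) (i j : 'I_K) : R :=
  expR (logits E Et W i j) / \sum_(k < K) expR (logits E Et W k j).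

Definition subloss (K : nat) (alpha : R) (E Et W : 'M[R]_K) (j : 'I_K) : R :=
  - \sum_(i < K) cond_p alpha i j * ln (phat E Et W i j).

Definition totloss (K : nat) (p : 'I_K -> R) (alpha : R) (E Et W : 'M[R]_K) : R :=
  \sum_(j < K) p j * subloss alpha E Et W j.

Definition grad (K : nat) (f : 'M[R]_K -> R) (W : 'M[R]_K) : 'M[R]_K :=
  \matrix_(a < K, b < K) derive1 (fun s : R => f (W + s *: delta_mx a b)) 0.

Fixpoint gd (K : nat) (f : 'M[R]_K -> R) (eta : R) (W0 : 'M[R]_K) (t : nat)
  : 'M[R]_K :=
  match t with
  | 0 => W0
  | t'.+1 => gd f eta W0 t' - eta *: grad f (gd f eta W0 t')
  end.

End Model.

(* Main.v *)
Require Import Defs.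
From HB Require Import structures.
From mathcomp Require Import all_boot all_order all_algebra.
From mathcomp Require Import all_classical all_reals all_analysis.
From mathcomp Require Import ring lra zify.
Import Order.TTheory GRing.Theory Num.Theory.
Local Open Scope ring_scope.
Section M.
Variable R : realType.
Variable K : nat.
Implicit Types (E Et W : 'M[R]_K).

Lemma is_derive_ext (f g : R -> R) (x df dg : R) :
  f = g -> df = dg -> is_derive x 1 f df -> is_derive x 1 g dg.
Proof. by move=> -> ->. Qed.

Lemma is_derive_sumf n (h : 'I_n -> R -> R) (x : R) dh :
  (forall i, is_derive x 1 (h i) (dh i)) ->
  is_derive x 1 (fun s => \sum_(i < n) h i s) (\sum_(i < n) dh i).
Proof. by move=> H; have := is_derive_sum H; rewrite fct_sumE. Qed.

Lemma is_derive_lin (z c : R) : is_derive (0:R) 1 (fun s => z + s * c) c.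
Proof.
have H1 : is_derive (0:R) 1 (cst z) 0 := is_derive_cst _ _ _.
have H2 : is_derive (0:R) 1 (@id R) 1 := is_derive_id _ _.
have H3 := is_deriveD H1 (is_deriveZ c H2).
apply: (is_derive_ext _ _ _ _ _ _ _ H3).
  by apply/funext => s /=; rewrite mulrC.
by rewrite add0r; exact: mulr1.
Qed.

Lemma is_derive_explin (z c : R) :
  is_derive (0:R) 1 (fun s => expR (z + s * c)) (expR z * c).
Proof.
have H := @is_derive1_comp R expR (fun s => z + s * c) 0 _ _
  (is_derive_expR _) (is_derive_lin z c).
by move: H; rewrite mul0r addr0.
Qed.

Lemma is_derive_lnf (g : R -> R) (dg : R) :
  0 < g 0 -> is_derive (0:R) 1 g dg ->
  is_derive (0:R) 1 (fun s => ln (g s)) ((g 0)^-1 * dg).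
Proof.
move=> g0 H.
have H2 := @is_derive1_comp R (@ln R) g 0 _ _ (@is_derive1_ln R (g 0) g0) H. exact: H2.
Qed.

Lemma derive1_val (f : R -> R) (df : R) : is_derive (0:R) 1 f df -> derive1 f 0 = df.
Proof. by move=> H; rewrite derive1E derive_val. Qed.

Lemma logits_lin E Et W a b (s : R) :
  logits E Et (W + s *: delta_mx a b) =
  logits E Et W + s *: \matrix_(k, j) (Et a k * E b j).
Proof.
rewrite /logits mulmxDr mulmxDl -scalemxAr -scalemxAl; congr (_ + _ *: _).
apply/matrixP => k j; rewrite !mxE.
rewrite (bigD1 b) //= big1 ?addr0; last first.
  by move=> l lb; rewrite !mxE big1 ?mul0r // => m _; rewrite !mxE (negbTE lb) andbF mulr0.
rewrite !mxE (bigD1 a) //= big1 ?addr0; last first.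
  by move=> m ma; rewrite !mxE (negbTE ma) mulr0.
by rewrite !mxE !eqxx mulr1.
Qed.

Definition Ssum (Z : 'M[R]_K) (j : 'I_K) := \sum_(k < K) expR (Z k j).

Lemma Ssum_gt0 (Z : 'M[R]_K) j : 0 < Ssum Z j.
Proof.
rewrite /Ssum (bigD1 j) //=; apply: ltr_pwDl; first exact: expR_gt0.
by apply: sumr_ge0 => i _; exact: expR_ge0.
Qed.

Lemma subloss0 E Et W j :
  subloss 0 E Et W j = ln (Ssum (logits E Et W) j) - logits E Et W j j.
Proof.
rewrite /subloss (bigD1 j) //= big1 ?addr0; last first.
  by move=> i ij; rewrite /cond_p (negbTE ij) mul0r mul0r.
rewrite /cond_p eqxx mul0r subr0 addr0 mul1r /phat.
rewrite ln_div ?posrE ?expR_gt0 //; last exact: Ssum_gt0.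
by rewrite expRK opprB.
Qed.

Lemma is_derive_scalf (k : R) (f : R -> R) df :
  is_derive (0:R) 1 f df -> is_derive (0:R) 1 (fun s => k * f s) (k * df).
Proof.
move=> H; have H3 := is_deriveZ k H; by apply: (@is_derive_ext _ _ _ _ _ _ _ H3).
Qed.

Lemma is_derive_subf (f g : R -> R) df dg :
  is_derive (0:R) 1 f df -> is_derive (0:R) 1 g dg ->
  is_derive (0:R) 1 (fun s => f s - g s) (df - dg).
Proof.
move=> H1 H2; have H3 := is_deriveB H1 H2; by apply: (@is_derive_ext _ _ _ _ _ _ _ H3).
Qed.

Definition Gmat (p : 'I_K -> R) (Z : 'M[R]_K) : 'M[R]_K :=
  \matrix_(k, j) (p j * (expR (Z k j) / Ssum Z j - (k == j)%:R)).

Lemma grad_eq p E Et W :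
  grad (totloss p 0 E Et) W = Et *m Gmat p (logits E Et W) *m E^T.
Proof.
apply/matrixP => a b; rewrite mxE.
set Z := logits E Et W.
set c := \matrix_(k, j) (Et a k * E b j).
have -> : (fun s => totloss p 0 E Et (W + s *: delta_mx a b)) =
  (fun s => \sum_(j < K) (fun j s => p j * (ln (\sum_(k < K) expR (Z k j + s * c k j))
     - (Z j j + s * c j j))) j s).
  apply/funext => s; rewrite /totloss; apply: eq_bigr => j _.
  rewrite subloss0 logits_lin /Ssum !mxE; congr (_ * (ln _ - _)).
  by apply: eq_bigr => k _; rewrite !mxE.
rewrite (@derive1_val _ _ (@is_derive_sumf _ _ _ _ (fun j =>
  is_derive_scalf (p j) _ _ (is_derive_subf _ _ _ _
     (@is_derive_lnf _ _ _ (@is_derive_sumf _ _ _ _ (fun k => @is_derive_explin (Z k j) (c k j))))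
     (@is_derive_lin (Z j j) (c j j)))))); last first.
  move=> j; under eq_bigr => k _ do rewrite mul0r addr0.
  exact: Ssum_gt0.
clearbody Z; rewrite /c /Gmat.
rewrite [RHS]mxE; apply: eq_bigr => j _.
under eq_bigr => k _ do rewrite mul0r addr0.
rewrite [_ j b]mxE [_ a j]mxE.
under [in RHS]eq_bigr => k _ do rewrite [in X in _ * X]mxE.
under [in RHS]eq_bigr => k _ do rewrite mulrBr mulrBr.
rewrite sumrB.
have -> : \sum_k Et a k * (p j * (k == j)%:R) = Et a j * p j.
  rewrite (bigD1 j) //= big1 ?addr0 ?eqxx ?mulr1 //.
  by move=> k kj; rewrite (negbTE kj) !mulr0.
rewrite !mulrBl mulrBr !mxE; congr (_ - _); last by ring.
rewrite mulr_suml mulr_sumr mulr_sumr; apply: eq_bigr => k _.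
rewrite !mxE /Ssum; ring.
Qed.

Lemma logits_step p E Et W : E^T *m E = 1%:M -> Et^T *m Et = 1%:M ->
  logits E Et (W - 1 *: grad (totloss p 0 E Et) W) =
  logits E Et W - Gmat p (logits E Et W).
Proof.
move=> hE hEt.
rewrite scale1r grad_eq {1}/logits mulmxBr mulmxBl; congr (_ - _).
by rewrite !mulmxA hEt mul1mx -mulmxA hE mulmx1.
Qed.

Definition Zs p E Et t := logits E Et (gd (totloss p 0 E Et) 1 0 t).

Lemma Zs_S p E Et t : E^T *m E = 1%:M -> Et^T *m Et = 1%:M ->
  Zs p E Et t.+1 = Zs p E Et t - Gmat p (Zs p E Et t).
Proof. by move=> hE hEt; rewrite /Zs /= logits_step. Qed.

Lemma Zs_0 p E Et : Zs p E Et 0 = 0.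
Proof. by rewrite /Zs /= /logits mulmx0 mul0mx. Qed.

Lemma Zs_inv p E Et t j k l : E^T *m E = 1%:M -> Et^T *m Et = 1%:M ->
  k != j -> l != j -> Zs p E Et t k j = Zs p E Et t l j.
Proof.
move=> hE hEt kj lj; elim: t => [|t IH]; first by rewrite Zs_0 !mxE.
rewrite Zs_S //; move: IH; set Z := Zs p E Et t; clearbody Z => IH.
by rewrite !mxE (negbTE kj) (negbTE lj) IH.
Qed.

Lemma Ssum_split (Z : 'M[R]_K) j k : k != j ->
  (forall l, l != j -> Z l j = Z k j) ->
  Ssum Z j = expR (Z j j) + (K.-1)%:R * expR (Z k j).
Proof.
move=> kj hl; rewrite /Ssum (bigD1 j) //=; congr (_ + _).
rewrite (eq_bigr (fun _ => expR (Z k j))); last by move=> l lj; rewrite hl.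
by rewrite sumr_const cardC1 card_ord mulr_natl.
Qed.

Lemma dyn_j p E Et j k : (1 < K)%N -> E^T *m E = 1%:M -> Et^T *m Et = 1%:M ->
  k != j ->
  let v := fun t => expR (Zs p E Et t j j - Zs p E Et t k j) / (K%:R - 1) in
  [/\ v 0%N = (K%:R - 1)^-1,
      forall t, v t.+1 = v t * expR (p j * K%:R / (K%:R - 1) / (1 + v t)) &
      forall t, subloss 0 E Et (gd (totloss p 0 E Et) 1 0 t) j = ln (1 + (v t)^-1)].
Proof.
move=> K1 hE hEt kj v.
have kK : (K.-1)%:R = K%:R - 1 :> R.
  by rewrite -subn1 natrB //; apply: ltnW.
have k1 : 0 < K%:R - 1 :> R.
  by rewrite -kK ltr0n; case: K K1 {kK kj v hE hEt E Et p j k} => [|[|n]].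
have hS t : Ssum (Zs p E Et t) j =
    expR (Zs p E Et t j j) + (K%:R - 1) * expR (Zs p E Et t k j).
  by rewrite (Ssum_split _ _ _ kj) ?kK // => l lj; exact: Zs_inv.
split.
- by rewrite /v Zs_0 !mxE subrr expR0 div1r.
- move=> t; rewrite /v.
  have hd : Zs p E Et t.+1 j j - Zs p E Et t.+1 k j =
     (Zs p E Et t j j - Zs p E Et t k j) + p j * K%:R / (K%:R - 1) /
        (1 + expR (Zs p E Et t j j - Zs p E Et t k j) / (K%:R - 1)).
    rewrite Zs_S //; have hSt := hS t; move: hSt.
    set Z := Zs p E Et t; clearbody Z => hSt.
    rewrite !mxE eqxx (negbTE kj) hSt expRB.
    have ea := expR_gt0 (Z j j); have ec := expR_gt0 (Z k j).
    set a := expR (Z j j); set c := expR (Z k j).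
    have h1 : 0 < a + (K%:R - 1) * c by apply: addr_gt0 => //; apply: mulr_gt0.
    rewrite (_ : true%:R = 1 :> R) // (_ : false%:R = 0 :> R) //.
    field.
    rewrite !gt_eqF //=.
      by rewrite addrC mulrC.
  by rewrite hd expRD mulrAC.
- move=> t; rewrite subloss0 -/(Zs p E Et t) hS.
  have ea := expR_gt0 (Zs p E Et t j j); have ec := expR_gt0 (Zs p E Et t k j).
  have h1 : 0 < expR (Zs p E Et t j j) + (K%:R - 1) * expR (Zs p E Et t k j).
    by apply: addr_gt0 => //; apply: mulr_gt0.
  rewrite -{2}(expRK (Zs p E Et t j j)) -ln_div ?posrE //.
  congr ln; rewrite /v expRB.
  set a := expR (Zs p E Et t j j); set c := expR (Zs p E Et t k j).
  field.
  rewrite !gt_eqF //.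
Qed.
End M.

Section S.
Variable R : realType.

Lemma expR_le_aux (x : R) : 0 <= x -> x <= 2 -> expR x <= 1 + x * expR 2.
Proof.
move=> x0 x2.
have h1 : 1 - x <= expR (- x) by have := expR_ge1Dx (- x); rewrite -[1 - x]/(1 + - x).
have ex : 0 < expR x := expR_gt0 x.
have h2 : expR x <= 1 + x * expR x.
  have : (1 - x) * expR x <= expR (- x) * expR x by rewrite ler_pM2r.
  rewrite -expRD addNr expR0 => h; nra.
have h3 : expR x <= expR 2 by rewrite ler_expR.
nra.
Qed.

Lemma ln_lo (v : R) : 0 < v -> (1 + v)^-1 <= ln (1 + v^-1).
Proof.
move=> v0.
set y := 1 + v^-1.
have y0 : 0 < y by rewrite /y; apply: addr_gt0 => //; rewrite invr_gt0.
have h : ln (y^-1) <= y^-1 - 1.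
  have e : 1 + (y^-1 - 1) = y^-1 by ring.
  have := @le_ln1Dx R (y^-1 - 1); rewrite e; apply.
  by rewrite ltrBrDl subrr invr_gt0.
rewrite lnV ?posrE // in h.
have -> : (1 + v)^-1 = 1 - y^-1.
  rewrite /y; field; rewrite gt_eqF // gt_eqF //; lra.
lra.
Qed.

Lemma frac_ge (v k : R) : 0 < v -> 0 < k -> 1 <= v * (k - 1) -> k^-1 <= v / (1 + v).
Proof.
move=> v0 k0 h.
rewrite ler_pdivlMr; last lra.
rewrite mulrC ler_pdivrMr //.
nra.
Qed.

Lemma seq_main (k p : R) (v : nat -> R) :
  2 <= k -> 0 < p -> p <= 1 ->
  v 0%N = (k - 1)^-1 ->
  (forall t, v t.+1 = v t * expR ((p * k / (k - 1)) / (1 + v t))) ->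
  forall t : nat, (2 * (Num.truncn (k / p)).+1 <= t)%N ->
   (2 + 2 * expR 2)^-1 / (p * t%:R) <= ln (1 + (v t)^-1) <= 4 / (p * t%:R).
Proof.
move=> k2 p0 p1 hv0 hv.
set b := p * k / (k - 1).
have k1 : 0 < k - 1 by lra.
have hb1 : p <= b.
  by rewrite /b ler_pdivlMr //; nra.
have hb2 : b <= 2 * p.
  by rewrite /b ler_pdivrMr //; nra.
have b0 : 0 < b by lra.
have vpos : forall t, 0 < v t.
  elim => [|t IH]; first by rewrite hv0 invr_gt0.
  by rewrite hv; apply: mulr_gt0 => //; exact: expR_gt0.
have step_lo : forall t, v t + b * (v t / (1 + v t)) <= v t.+1.
  move=> t; rewrite hv.
  have h := expR_ge1Dx (b / (1 + v t)).
  have -> : v t + b * (v t / (1 + v t)) = v t * (1 + b / (1 + v t)).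
    by field; have := vpos t; lra.
  by rewrite ler_pM2l.
have step_hi : forall t, v t.+1 <= v t + 2 * expR 2 * p.
  move=> t; rewrite hv.
  have vt := vpos t.
  set x := b / (1 + v t).
  have x0 : 0 <= x by rewrite /x divr_ge0 //; lra.
  have xb : x <= b by rewrite /x ler_pdivrMr; nra.
  have h22 : 2 * p <= 2 by lra.
  have h := expR_le_aux x x0 (le_trans xb (le_trans hb2 h22)).
  have e2 : 0 < expR (2:R) := expR_gt0 2.
  have vx : v t * x <= b by rewrite /x mulrA ler_pdivrMr; nra.
  have : v t * expR x <= v t * (1 + x * expR 2) by rewrite ler_pM2l.
  nra.
have lin_lo : forall t, (k - 1)^-1 + t%:R * (p / k) <= v t.
  elim => [|t IH]; first by rewrite hv0 mul0r addr0.
  have vt := vpos t.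
  have k0 : 0 < k by lra.
  have hk : 0 <= t%:R * (p / k) by apply: mulr_ge0 => //; apply: divr_ge0; lra.
  have h1 : 1 <= v t * (k - 1).
    have h0 : (k - 1)^-1 <= v t by lra.
    have e : (k - 1)^-1 * (k - 1) = 1 by rewrite mulVf // gt_eqF.
    nra.
  have q := frac_ge _ _ vt k0 h1.
  have q0 : 0 < v t / (1 + v t) by rewrite divr_gt0 //; lra.
  have : p * k^-1 <= b * (v t / (1 + v t)).
    apply: (le_trans (y := p * (v t / (1 + v t)))); first by rewrite ler_pM2l.
    by rewrite ler_pM2r.
  have := step_lo t.
  rewrite -[t.+1%:R]nat1r mulrDl mul1r. lra.
set T1 := (Num.truncn (k / p)).+1.
have hT1 : k / p < T1%:R by exact: truncnS_gt.
clearbody T1.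
have hT1' : k < T1%:R * p by rewrite -ltr_pdivrMr.
have vT1 : 1 <= v T1.
  have := lin_lo T1.
  have : 1 <= T1%:R * (p / k).
    by rewrite mulrA ler_pdivlMr; lra.
  have : 0 <= (k - 1)^-1 by rewrite invr_ge0; lra.
  lra.
have grow : forall n, 1 + n%:R * (p / 2) <= v (T1 + n)%N.
  elim => [|n IH]; first by rewrite addn0 mul0r addr0.
  rewrite addnS.
  have vt := vpos (T1 + n)%N.
  have h1 : 1 <= v (T1 + n)%N * (2 - 1).
    have : 0 <= n%:R * (p / 2) by apply: mulr_ge0 => //; lra.
    lra.
  have h02 : (0:R) < 2 by lra.
  have q := frac_ge _ _ vt h02 h1.
  have q0 : 0 < v (T1 + n)%N / (1 + v (T1 + n)%N) by rewrite divr_gt0 //; lra.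
  have : p * 2^-1 <= b * (v (T1 + n)%N / (1 + v (T1 + n)%N)).
    apply: (le_trans (y := p * (v (T1 + n)%N / (1 + v (T1 + n)%N)))); first by rewrite ler_pM2l.
    by rewrite ler_pM2r.
  have := step_lo (T1 + n)%N.
  rewrite -[n.+1%:R]nat1r mulrDl mul1r. lra.
have ub_v : forall t, v t <= 1 + t%:R * (2 * expR 2 * p).
  elim => [|t IH].
    by rewrite hv0 mul0r addr0 invf_le1; lra.
  have := step_hi t.
  rewrite -[t.+1%:R]nat1r mulrDl mul1r. lra.
move=> t ht.
have tT1 : (T1 <= t)%N by move: ht; clear; lia.
set tt := t%:R.
have hpt : 2 <= p * tt.
  have : T1%:R <= tt by rewrite ler_nat.
  nra.
have pt0 : 0 < p * tt by lra.
have e2 : 0 < expR (2:R) := expR_gt0 2.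
apply/andP; split.
  have vt := vpos t.
  apply: le_trans (ln_lo _ vt).
  rewrite -invf_div lef_pV2 ?posrE; last 2 first.
  - by apply: divr_gt0 => //; lra.
  - lra.
  rewrite invrK.
  have := ub_v t; rewrite -/tt => h.
  lra.
have vt := vpos t.
have h1 : 0 < 1 + (v t)^-1 by rewrite addr_gt0 // invr_gt0.
apply: le_trans (le_ln1Dx _) _.
  have : 0 < (v t)^-1 by rewrite invr_gt0.
  lra.
have -> : 4 / (p * tt) = (p * tt / 4)^-1 by rewrite invf_div.
rewrite lef_pV2 ?posrE //; last by apply: divr_gt0 => //; lra.
have := grow (t - T1)%N; rewrite subnKC //.
have hn : (t <= 2 * (t - T1))%N.
  move: ht; clear; lia.
have : tt <= 2 * (t - T1)%N%:R.
  by rewrite /tt -natrM ler_nat.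
set n := (t - T1)%N%:R.
move=> h2 h3.
rewrite ler_pdivrMr; last lra.
have h4 : p * tt <= p * (2 * n) by rewrite ler_pM2l.
lra.
Qed.
End S.

Section F.
Variable R : realType.

Lemma sum_lo (n : nat) (p f : 'I_n -> R) (c tt : R) : 0 < tt ->
  (forall j, 0 < p j) -> (forall j, c / (p j * tt) <= f j) ->
  c * n%:R / tt <= \sum_(j < n) p j * f j.
Proof.
move=> t0 hp hf.
have e : \sum_(j < n) p j * (c / (p j * tt)) = c * n%:R / tt.
  rewrite (eq_bigr (fun _ => c / tt)); last first.
    by move=> j _; field; rewrite !gt_eqF.
  rewrite sumr_const card_ord -mulr_natr; ring.
by rewrite -e; apply: ler_sum => j _; rewrite ler_pM2l.
Qed.

Lemma sum_hi (n : nat) (p f : 'I_n -> R) (c tt : R) : 0 < tt ->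
  (forall j, 0 < p j) -> (forall j, f j <= c / (p j * tt)) ->
  \sum_(j < n) p j * f j <= c * n%:R / tt.
Proof.
move=> t0 hp hf.
have e : \sum_(j < n) p j * (c / (p j * tt)) = c * n%:R / tt.
  rewrite (eq_bigr (fun _ => c / tt)); last first.
    by move=> j _; field; rewrite !gt_eqF.
  rewrite sumr_const card_ord -mulr_natr; ring.
by rewrite -e; apply: ler_sum => j _; rewrite ler_pM2l.
Qed.
End F.

Theorem theorem4p1 (R : realType) :
  exists c1 c2 : R, 0 < c1 /\ 0 < c2 /\
  forall (M C : nat) (ptil : 'I_M -> R) (E Et : 'M[R]_(M * C)),
    (1 < M * C)%N ->
    (forall i i' : 'I_M, (i < i')%N -> ptil i' < ptil i) ->
    (forall i : 'I_M, 0 < ptil i) ->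
    \sum_(i < M) ptil i = 1 ->
    E^T *m E = 1%:M ->
    Et^T *m Et = 1%:M ->
    let alpha : R := 0 in
    let p := @freq R M C ptil in
    let L := totloss p alpha E Et in
    let W := gd L 1 0 in
    exists T0 : nat, forall t : nat, (T0 <= t)%N ->
      (forall j : 'I_(M * C),
          c1 / (p j * t%:R) <= subloss alpha E Et (W t) j <= c2 / (p j * t%:R)) /\
      c1 * (M * C)%:R / t%:R <= L (W t) <= c2 * (M * C)%:R / t%:R.
Proof.
have e2 := expR_gt0 (2:R).
exists (2 + 2 * expR 2)^-1, 4; split; first by rewrite invr_gt0; lra.
split; first by lra.
move=> M C ptil E Et K1 _ hpos hsum hE hEt alpha p L W.
have C0 : (0 < C)%N by case: C K1 {E Et hE hEt p L W} => //; rewrite muln0.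
have hp : forall j, 0 < p j /\ p j <= 1.
  move=> j; rewrite /p /freq.
  have c0 : (0:R) < C%:R by rewrite ltr0n.
  split; first by rewrite divr_gt0.
  rewrite ler_pdivrMr // mul1r.
  have h1 : ptil (group j) <= 1.
    rewrite -hsum (bigD1 (group j)) //= lerDl.
    by apply: sumr_ge0 => i _; apply: ltW.
  have : (1:R) <= C%:R by rewrite ler1n.
  lra.
set T0 := \max_(j < M * C) (2 * (Num.truncn ((M * C)%:R / p j)).+1)%N.
exists T0 => t ht.
have K0 : (0 < M * C)%N by apply: ltnW.
have t2 : (2 <= t)%N.
  apply: leq_trans ht; apply: leq_trans (leq_bigmax (Ordinal K0)).
  by rewrite leq_pmulr.
have t0 : (0:R) < t%:R by rewrite ltr0n; apply: leq_trans t2.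
have hj : forall j, (2 + 2 * expR 2)^-1 / (p j * t%:R) <= subloss alpha E Et (W t) j
   <= 4 / (p j * t%:R).
  move=> j.
  pose o0 : 'I_(M * C) := Ordinal K0.
  pose o1 : 'I_(M * C) := Ordinal K1.
  pose k := if j == o0 then o1 else o0.
  have kj : k != j.
    rewrite /k; have [->|h] := eqVneq j o0; first by [].
    by rewrite eq_sym.
  have [v0 vS vL] := @dyn_j R (M * C) p E Et j k K1 hE hEt kj.
  rewrite /W /L /alpha vL.
  have [p0 p1] := hp j.
  have K2 : (2:R) <= (M * C)%:R by rewrite (ler_nat R 2).
  have ht' : (2 * (Num.truncn ((M * C)%:R / p j)).+1 <= t)%N.
    by apply: leq_trans ht; apply: (leq_bigmax j).
  have H := @seq_main R _ (p j) _ K2 p0 p1 v0 vS t ht'.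
  exact: H.
split; first exact: hj.
have hL : L (W t) = \sum_(j < M * C) p j * subloss alpha E Et (W t) j by [].
rewrite hL; apply/andP; split.
  apply: sum_lo => // j; [exact: (proj1 (hp j)) | by case/andP: (hj j)].
apply: sum_hi => // j; [exact: (proj1 (hp j)) | by case/andP: (hj j)].
Qed.
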